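(* Let $\mathcal{U},\mathcal{X}$ be Banach spaces with either $\mathcal{X}=\mathcal{U}^*$ or $\mathcal{U}=\mathcal{X}^*$, denote by $\langle\cdot,\cdot\rangle_{\mathcal{U},\mathcal{X}}$ the corresponding duality pairing, let $\mathcal{G}$ be a Hilbert space, $g^\delta\in\mathcal{G}$, and $K\in L(\mathcal{U},\mathcal{G})$ with an adjoint $K^*\in L(\mathcal{G},\mathcal{X})$ satisfying $(Ku,g)_\mathcal{G}=\langle u,K^*g\rangle_{\mathcal{U},\mathcal{X}}$ for all $u\in\mathcal{U}$, $g\in\mathcal{G}$. Let $\{\mathcal{R}_\alpha\}_{\alpha>0}$ be proper, convex, lower semicontinuous functionals $\mathcal{R}_\alpha:\mathcal{U}\to\mathbb{R}\cup\{+\infty\}$, let $G(g):=\frac12\|g-g^\delta\|_\mathcal{G}^2$, and $J_\alpha(u,g):=G(g)+\mathcal{R}_\alpha(u)$. Let $u_\alpha^\delta$ be a minimizer of $u\mapsto J_\alpha(u,Ku)$ over $\mathcal{U}$. Assume there is a family of functions $\phi_\alpha:\mathcal{U}\times\mathcal{U}\to[0,\infty)$ satisfying $$\lambda(1-\lambda)\phi_\alpha(u_1,u_2)\le\lambda\mathcal{R}_\alpha(u_1)+(1-\lambda)\mathcal{R}_\alpha(u_2)-\mathcal{R}_\alpha(\lambda u_1+(1-\lambda)u_2)$$ for all $u_1,u_2\in\mathcal{U}$, $\alpha>0$, $\lambda\in(0,1)$. Then every $v\in\mathcal{U}$ and $g^*\in\mathcal{G}$ satisfy $$\frac12\|K(u_\alpha^\delta-v)\|_\mathcal{G}^2+\phi_\alpha(u_\alpha^\delta,v)\le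 J_\alpha(v,Kv)-J_\alpha(u_\alpha^\delta,Ku_\alpha^\delta)\le\mathcal{R}_\alpha(v)+\mathcal{R}_\alpha^*(K^*g^* )+G(Kv)+G^*(-g^* ).$$
   Context: For a convex functional $F:\mathcal{U}\to\mathbb{R}\cup\{+\infty\}$, its Fenchel conjugate is defined on $\mathcal{X}$ by $F^*(x)=\sup_{u\in\mathcal{U}}\langle u,x\rangle_{\mathcal{U},\mathcal{X}}-F(u)$; for $G$ on the Hilbert space $\mathcal{G}$, $G^*(g^* )=\sup_{g\in\mathcal{G}}(g^*,g)_\mathcal{G}-G(g)$. *)

(* Defs.v *)
From mathcomp Require Import all_boot all_order all_algebra.
From mathcomp Require Import all_classical all_reals all_analysis.
Set Implicit Arguments. Unset Strict Implicit. Unset Printing Implicit Defensive.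
Import Order.TTheory GRing.Theory Num.Theory.
Import numFieldNormedType.Exports.
Local Open Scope classical_set_scope.
Local Open Scope ring_scope.

Definition bounded_linear {R : realType} (V W : normedModType R) (f : V -> W) :=
  (forall (a : R) (u v : V), f (a *: u + v) = a *: f u + f v) /\ continuous f.

(* [dual_of p]: the normed space X is (isometrically) the dual U^* of U,
   the identification being given by the pairing p : U -> X -> R:
   p is bilinear, the norm of x is the dual norm of p(.,x), and every
   continuous linear functional on U is of the form p(.,x). *)
Definition dual_of {R : realType} (U X : normedModType R) (p : U -> X -> R) :=
  [/\ (forall (a : R) u1 u2 x, p (a *: u1 + u2) x = a * p u1 x + p u2 x),
      (forall (a : R) u x1 x2, p u (a *: x1 + x2) = a * p u x1 + p u x2),
      (forall u x, `|p u x| <= `|x| * `|u|),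
      (forall x (e : R), 0 < e -> exists u, `|u| <= 1 /\ `|x| - e <= `|p u x|) &
      (forall f : U -> R, bounded_linear (f : U -> R^o) ->
         exists x, forall u, f u = p u x)].

Definition duality_pairing {R : realType} (U X : normedModType R) (p : U -> X -> R) :=
  dual_of p \/ dual_of (fun (x : X) (u : U) => p u x).

Definition hilbert_ip {R : realType} (G : normedModType R) (ip : G -> G -> R) :=
  [/\ (forall g h, ip g h = ip h g),
      (forall (a : R) g1 g2 h, ip (a *: g1 + g2) h = a * ip g1 h + ip g2 h) &
      (forall g, ip g g = `|g| ^+ 2)].

Local Open Scope ereal_scope.

Definition proper_fun {R : realType} (U : Type) (F : U -> \bar R) :=
  (forall u, F u != -oo) /\ exists u, F u \is a fin_num.

Definition convex_fun {R : realType} (U : lmodType R) (F : U -> \bar R) :=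
  forall (u1 u2 : U) (l : R), (0 < l < 1)%R ->
    F (l *: u1 + (1 - l) *: u2)%R <= l%:E * F u1 + (1 - l)%R%:E * F u2.

Definition fenchel_conj {R : realType} (U X : Type) (p : U -> X -> R)
  (F : U -> \bar R) (x : X) : \bar R :=
  ereal_sup (range (fun u => (p u x)%:E - F u)).

(* Main.v *)
Require Import Defs.
From mathcomp Require Import all_boot all_order all_algebra.
From mathcomp Require Import all_classical all_reals all_analysis.
From mathcomp Require Import ring lra.
Import Order.TTheory GRing.Theory Num.Theory.
Import numFieldNormedType.Exports.
Local Open Scope classical_set_scope.
Local Open Scope ring_scope.

Lemma small_lemma (R: realFieldType) (X Y : R) : 0 <= Y ->
  (forall t, 0 < t < 1 -> t * X <= t*t*Y) -> X <= 0.
Proof.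
move=> hY H; rewrite leNgt; apply/negP => hX.
have hp : 0 < X + Y + 1 by lra.
set t := X / (X + Y + 1).
have ht0 : 0 < t by rewrite /t divr_gt0.
have htt : t * (X + Y + 1) = X by rewrite /t mulfVK // gt_eqF.
have ht1 : t < 1 by rewrite /t ltr_pdivrMr // mul1r; lra.
have := H t; rewrite ht0 ht1 => /(_ isT) h.
have h2 : X <= t * Y by rewrite -(ler_pM2l ht0) mulrA.
nra.
Qed.

Lemma zz_lemma (G : zmodType) (A B C g : G) : A - C + B - g = A - g + (B - C).
Proof. rewrite -!addrA; congr (_ + _). by rewrite addrCA [RHS]addrCA [- C + _]addrC. Qed.

Theorem proposition2p2 (R : realType)
  (U X G : completeNormedModType R)
  (pair : U -> X -> R) (hpair : duality_pairing pair)
  (ip : G -> G -> R) (hip : hilbert_ip ip)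
  (gdelta : G)
  (K : U -> G) (hK : bounded_linear K)
  (Kadj : G -> X) (hKadj : bounded_linear Kadj)
  (hadj : forall u g, ip (K u) g = pair u (Kadj g))
  (Ra : R -> U -> \bar R)
  (hRproper : forall alpha, 0 < alpha -> proper_fun (Ra alpha))
  (hRconvex : forall alpha, 0 < alpha -> convex_fun (Ra alpha))
  (hRlsc : forall alpha, 0 < alpha -> lower_semicontinuous (Ra alpha))
  (alpha : R) (halpha : 0 < alpha)
  (ua : U)
  (hmin : forall w : U,
     ((2^-1 * `|K ua - gdelta| ^+ 2)%:E + Ra alpha ua <=
      (2^-1 * `|K w - gdelta| ^+ 2)%:E + Ra alpha w)%E)
  (phi : R -> U -> U -> R)
  (hphi0 : forall a u1 u2, 0 < a -> 0 <= phi a u1 u2)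
  (hphi : forall a (u1 u2 : U) (l : R), 0 < a -> 0 < l < 1 ->
     ((l * (1 - l) * phi a u1 u2)%:E + Ra a (l *: u1 + (1 - l) *: u2)%R <=
      l%:E * Ra a u1 + (1 - l)%R%:E * Ra a u2)%E)
  (v : U) (gstar : G) :
  let Gf := fun g : G => 2^-1 * `|g - gdelta| ^+ 2 in
  let J := fun (u : U) (g : G) => ((Gf g)%:E + Ra alpha u)%E in
  ((2^-1 * `|K (ua - v)| ^+ 2 + phi alpha ua v)%:E
     <= J v (K v) - J ua (K ua))%E /\
  (J v (K v) - J ua (K ua)
     <= Ra alpha v + fenchel_conj pair (Ra alpha) (Kadj gstar)
        + (Gf (K v))%:E
        + fenchel_conj ip (fun g => (Gf g)%:E) (- gstar)%R)%E.
Proof.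
move=> Gf J; rewrite {}/J {}/Gf.
have [KL _] := hK.
have K0 : K 0 = 0.
  have := KL 1 0 0; rewrite scaler0 addr0 scale1r => /esym/eqP.
  by rewrite -subr_eq0 addrK => /eqP.
have KZ a u : K (a *: u) = a *: K u by have := KL a u 0; rewrite !addr0 K0 addr0.
have KD u w : K (u + w) = K u + K w by have := KL 1 u w; rewrite !scale1r.
have KB u w : K (u - w) = K u - K w.
  by rewrite KD -scaleN1r KZ scaleN1r.
have [ipC ipL ipN2] := hip.
have ipD1 g1 g2 h : ip (g1 + g2) h = ip g1 h + ip g2 h.
  by have := ipL 1 g1 g2 h; rewrite scale1r mul1r.
have ip01 h : ip 0 h = 0.
  have := ipD1 0 0 h; rewrite addr0 => /esym/eqP.
  by rewrite -subr_eq0 addrK => /eqP.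
have ipZ1 a g h : ip (a *: g) h = a * ip g h.
  by have := ipL a g 0 h; rewrite addr0 ip01 addr0.
have ipN h g : ip g (- h) = - ip g h.
  by rewrite ipC -scaleN1r ipZ1 ipC mulN1r.
have ip_sq x y t : `|x + t *: y| ^+ 2 = `|x| ^+ 2 + 2 * t * ip x y + t ^+ 2 * `|y| ^+ 2.
  rewrite -!ipN2 !ipD1 !ipZ1 (ipC x (x + _)) (ipC y (x + _)) !ipD1 !ipZ1 (ipC y x); ring.
have [hninf [u0 hu0]] := hRproper alpha halpha.
have [r E] : exists r, Ra alpha ua = r%:E.
  case E: (Ra alpha ua) => [r| |]; first by exists r.
  - exfalso; have := hmin u0; rewrite E addey //.
    by case: (Ra alpha u0) hu0.
  - by have := hninf ua; rewrite E.
split.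
- case Ev: (Ra alpha v) => [rv| |]; last by have := hninf v; rewrite Ev.
    rewrite E -!EFinD lee_fin.
    set e := K ua - gdelta; set d := K v - K ua.
    have hKv : K v - gdelta = e + 1 *: d.
      by rewrite scale1r /e /d [RHS]addrC addrA subrK.
    have hKd : `|K (ua - v)| = `|d| by rewrite KB /d -opprB normrN.
    have hGv := ip_sq e d 1.
    rewrite -hKv in hGv.
    set X0 := phi alpha ua v + r - rv - ip e d.
    set Y0 := phi alpha ua v + 2^-1 * `|d| ^+ 2.
    suff : X0 <= 0.
      rewrite /X0 hKd hGv /e; move=> h; rewrite expr1n !mulr1 mul1r in hGv *; lra.
    apply: (@small_lemma _ X0 Y0).
      rewrite /Y0; have := hphi0 alpha ua v halpha.
      have : 0 <= `|d| ^+ 2 by rewrite exprn_ge0.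
      lra.
    move=> t /andP[t0 t1].
    have hl : 0 < 1 - t < 1 by apply/andP; split; lra.
    have hw := hphi alpha ua v (1 - t) halpha hl.
    set w := (1 - t) *: ua + (1 - (1 - t)) *: v in hw.
    rewrite E Ev in hw.
    case Ew : (Ra alpha w) hw => [rw| |] hw; last by have := hninf w; rewrite Ew.
    * rewrite -!EFinM -!EFinD lee_fin in hw.
      have hm := hmin w; rewrite E Ew -!EFinD lee_fin in hm.
      have hKw : K w - gdelta = e + t *: d.
        rewrite /w KD !KZ /e /d.
        have -> : 1 - (1 - t) = t by ring.
        rewrite scalerBl scale1r scalerBr.
        exact: zz_lemma.
      rewrite hKw ip_sq in hm.
      rewrite /X0 /Y0; nra.
    * exfalso; move: hw; rewrite addey //.
  + by rewrite E addey //= addye // leey.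
- have lb1 : ((pair ua (Kadj gstar))%:E - Ra alpha ua <=
      fenchel_conj pair (Ra alpha) (Kadj gstar))%E.
    by apply: ereal_sup_ubound; exists ua.
  have lb2 : ((ip (K ua) (- gstar)%R)%:E - (2^-1 * `|K ua - gdelta| ^+ 2)%:E <=
      fenchel_conj ip (fun g => (2^-1 * `|g - gdelta| ^+ 2)%:E) (- gstar)%R)%E.
    by apply: ereal_sup_ubound; exists (K ua).
  apply: le_trans; last first.
    apply: leeD; last exact: lb2.
    apply: leeD; last exact: lexx.
    apply: leeD; last exact: lb1.
    exact: lexx.
  rewrite E ipN hadj.
  case Ev: (Ra alpha v) => [rv| |]; last by have := hninf v; rewrite Ev.
  + rewrite /= -!EFinD lee_fin; lra.
  + by rewrite -!EFinD addey // !addye.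
Qed.
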